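(* Let $\mathfrak e$ be an edge, $p\in\mathbb N$, $\tau_{\mathfrak e}>0$, let boundary data $\bar{\vec u}_{\mathfrak n},\bar{\vec r}_{\mathfrak n}\in\mathbb R^3$ be given for the two endpoints $\mathfrak n$ of $\mathfrak e$, and let $\vec f_{\mathfrak e},\vec g_{\mathfrak e}\in(L^2(\mathfrak e))^3$. Then there is a unique quadruple $\bar{\vec u}_{\mathfrak e},\bar{\vec r}_{\mathfrak e},\bar{\vec n}_{\mathfrak e},\bar{\vec m}_{\mathfrak e}\in V_p^{\mathfrak e}$ such that for all $\bar{\vec p},\bar{\vec q},\bar{\vec v},\bar{\vec w}\in V_p^{\mathfrak e}$: \begin{align*} -(C_{\vec n}^{-1}\bar{\vec n}_{\mathfrak e},\bar{\vec p})_{\mathfrak e}+(\bar{\vec u}_{\mathfrak e},\partial_x\bar{\vec p})_{\mathfrak e}-(\vec i_{\mathfrak e}\times\bar{\vec r}_{\mathfrak e},\bar{\vec p})_{\mathfrak e}&=\langle\bar{\vec u}_{\mathfrak n},\bar{\vec p}\,\nu_{\mathfrak e}\rangle_{\mathfrak e},\\ -(C_{\vec m}^{-1}\bar{\vec m}_{\mathfrak e},\bar{\vec q})_{\mathfrak e}+(\bar{\vec r}_{\mathfrak e},\partial_x\bar{\vec q})_{\mathfrak e}&=\langle\bar{\vec r}_{\mathfrak n},\bar{\vec q}\,\nu_{\mathfrak e}\rangle_{\mathfrak e},\\ (\partial_x\bar{\vec n}_{\mathfrak e},\bar{\vec v})_{\mathfrak e}+\tau_{\mathfrak e}\langle\bar{\vec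 u}_{\mathfrak e},\bar{\vec v}\rangle_{\mathfrak e}&=(\vec f_{\mathfrak e},\bar{\vec v})_{\mathfrak e}+\tau_{\mathfrak e}\langle\bar{\vec u}_{\mathfrak n},\bar{\vec v}\rangle_{\mathfrak e},\\ (\vec i_{\mathfrak e}\times\bar{\vec n}_{\mathfrak e},\bar{\vec w})_{\mathfrak e}+(\partial_x\bar{\vec m}_{\mathfrak e},\bar{\vec w})_{\mathfrak e}+\tau_{\mathfrak e}\langle\bar{\vec r}_{\mathfrak e},\bar{\vec w}\rangle_{\mathfrak e}&=(\vec g_{\mathfrak e},\bar{\vec w})_{\mathfrak e}+\tau_{\mathfrak e}\langle\bar{\vec r}_{\mathfrak n},\bar{\vec w}\rangle_{\mathfrak e}. \end{align*}
   Context: An edge $\mathfrak e$ is the straight segment in $\mathbb R^3$ joining two distinct nodes $\mathfrak n_k,\mathfrak n_\ell$ ($k<\ell$), of length $h_{\mathfrak e}=|\mathfrak n_\ell-\mathfrak n_k|$, direction $\vec i_{\mathfrak e}=(\mathfrak n_\ell-\mathfrak n_k)/h_{\mathfrak e}$, scalar normals $\nu_{\mathfrak e}(\mathfrak n_k)=-1$, $\nu_{\mathfrak e}(\mathfrak n_\ell)=+1$. $x$ is the arclength coordinate on $\mathfrak e$ increasing in direction $\vec i_{\mathfrak e}$, $\partial_x$ its derivative, $\times$ the cross product. $C_{\vec n},C_{\vec m}$ are symmetric $\mathbb R^{3\times3}$-valued functions on $\mathfrak e$ satisfying $\alpha_{\vec n}|\xi|^2\le (C_{\vec n}(x)\xi)\cdot\xi\le\beta_{\vec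 n}|\xi|^2$, $\alpha_{\vec m}|\xi|^2\le (C_{\vec m}(x)\xi)\cdot\xi\le\beta_{\vec m}|\xi|^2$ for all $\xi\in\mathbb R^3$, $x\in\mathfrak e$, with constants $0<\alpha_{\cdot},\beta_{\cdot}<\infty$. $\mathds P_p(\mathfrak e)$ is the space of polynomials on $\mathfrak e$ of degree at most $p$ and $V_p^{\mathfrak e}=(\mathds P_p(\mathfrak e))^3$. Notation: $(\vec v,\vec w)_{\mathfrak e}=\int_{\mathfrak e}\vec v\cdot\vec w\,\mathrm d\sigma$; $\langle\vec a,\vec b\rangle_{\mathfrak e}=\sum_{\mathfrak n\text{ endpoint of }\mathfrak e}\vec a(\mathfrak n)\cdot\vec b(\mathfrak n)$, also applied to quantities only defined at endpoints (e.g. $\langle\bar{\vec u}_{\mathfrak n},\bar{\vec p}\,\nu_{\mathfrak e}\rangle_{\mathfrak e}=\sum_{\mathfrak n}\bar{\vec u}_{\mathfrak n}\cdot\bar{\vec p}(\mathfrak n)\nu_{\mathfrak e}(\mathfrak n)$). *)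

(* Defs.v *)
From HB Require Import structures.
From mathcomp Require Import all_boot all_order all_algebra.
From mathcomp Require Import all_classical all_reals all_analysis.
Set Implicit Arguments. Unset Strict Implicit. Unset Printing Implicit Defensive.
Import Order.TTheory GRing.Theory Num.Theory.
Import numFieldNormedType.Exports.
Local Open Scope classical_set_scope.
Local Open Scope ring_scope.

Notation polyvec R := (@matrix {poly R} 3 1) (only parsing).

Section Defs.
Variable R : realType.

Definition dot3 (a b : 'cV[R]_3) : R := \sum_i a i ord0 * b i ord0.

Definition c0 : 'I_3 := inord 0.
Definition c1 : 'I_3 := inord 1.
Definition c2 : 'I_3 := inord 2.

Definition cross3 (a b : 'cV[R]_3) : 'cV[R]_3 :=
  \col_(i < 3)
    (if nat_of_ord i == 0%N then a c1 ord0 * b c2 ord0 - a c2 ord0 * b c1 ord0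
     else if nat_of_ord i == 1%N then a c2 ord0 * b c0 ord0 - a c0 ord0 * b c2 ord0
     else a c0 ord0 * b c1 ord0 - a c1 ord0 * b c0 ord0).

Definition norm3 (a : 'cV[R]_3) : R := Num.sqrt (dot3 a a).

Definition in_Vp (p : nat) (P : polyvec R) : Prop := forall i, (size (P i ord0) <= p.+1)%N.

Definition evalv (P : polyvec R) (x : R) : 'cV[R]_3 := \col_i (P i ord0).[x].
Definition derivv (P : polyvec R) : polyvec R := \col_i (P i ord0)^`().

(* (F, G)_e over the edge parametrized by arclength x in [0, h] *)
Definition ip_e (h : R) (F G : R -> 'cV[R]_3) : R :=
  Rintegral lebesgue_measure `[0, h] (fun x => dot3 (F x) (G x)).

(* <a, b>_e : sum over the two endpoints x = 0 (node n_k) and x = h (node n_l) *)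
Definition bd_e (h : R) (F G : R -> 'cV[R]_3) : R :=
  dot3 (F 0) (G 0) + dot3 (F h) (G h).

End Defs.

(* Main.v *)
Require Import Defs.
From HB Require Import structures.
From mathcomp Require Import all_boot all_order all_algebra.
From mathcomp Require Import all_classical all_reals all_analysis.
From mathcomp Require Import ring lra.
Import Order.TTheory GRing.Theory Num.Theory.
Import numFieldNormedType.Exports.
Local Open Scope classical_set_scope.
Local Open Scope ring_scope.
Set Implicit Arguments. Unset Strict Implicit. Unset Printing Implicit Defensive.
Section Good.
Variable R : realType.
Variable h : R.
Hypothesis h0 : 0 < h.
Local Notation D := [set` `[0, h]].
Local Notation mu := (@lebesgue_measure R).

Lemma mD : measurable D.
Proof. exact: measurable_itv. Qed.

Lemma muD : (mu D < +oo)%E.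
Proof. by rewrite lebesgue_measure_itv /= lte_fin h0 -EFinB ltry. Qed.

Definition good (F : R -> R) :=
  measurable_fun D F /\ exists M, forall x, D x -> `|F x| <= M.

Lemma good_int F : good F -> mu.-integrable D (EFin \o F).
Proof.
move=> [mF [M HM]]; apply: (@measurable_bounded_integrable _ _ R mu F D mD muD mF).
exists M; split; first by rewrite num_real.
move=> y My x Dx /=; apply: le_trans (HM x Dx) _; exact: ltW.
Qed.

Lemma intD f g : mu.-integrable D (EFin \o f) -> mu.-integrable D (EFin \o g) ->
  mu.-integrable D (EFin \o (fun x => f x + g x)).
Proof.
move=> i1 i2.
apply: (@eq_integrable _ _ R mu D mD _ _ _ (@integrableD _ _ R mu D mD _ _ i1 i2)).
by move=> x _; rewrite /= EFinD.
Qed.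

Lemma intZ c f : mu.-integrable D (EFin \o f) ->
  mu.-integrable D (EFin \o (fun x => c * f x)).
Proof.
move=> i1.
apply: (@eq_integrable _ _ R mu D mD _ _ _ (@integrableZl _ _ R mu D mD c _ i1)).
by move=> x _; rewrite /= EFinM.
Qed.

Lemma RintD f1 f2 : mu.-integrable D (EFin \o f1) -> mu.-integrable D (EFin \o f2) ->
  \int[mu]_(x in D) (f1 x + f2 x) = \int[mu]_(x in D) f1 x + \int[mu]_(x in D) f2 x.
Proof. exact: (@RintegralD _ _ R mu D f1 f2 mD). Qed.

Lemma RintZ r f : mu.-integrable D (EFin \o f) ->
  \int[mu]_(x in D) (r * f x) = r * \int[mu]_(x in D) f x.
Proof. exact: (@RintegralZl _ _ R mu D f r mD). Qed.

Lemma good_eq F G : (forall x, F x = G x) -> good F -> good G.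
Proof. by move=> FG; have -> : F = G by apply: funext. Qed.

Lemma good_cst c : good (fun _ => c).
Proof. split; first exact: measurable_cst. by exists `|c|. Qed.

Lemma good_id : good id.
Proof.
split; first exact: measurable_id.
exists h => x /=; rewrite in_itv /= => /andP[x0 xh].
by rewrite ger0_norm.
Qed.

Lemma goodD F G : good F -> good G -> good (fun x => F x + G x).
Proof.
move=> [mF [M HM]] [mG [N HN]]; split; first exact: measurable_realfun.measurable_funD.
exists (M + N) => x Dx; apply: le_trans (ler_normD _ _) _.
by apply: lerD; [exact: HM|exact: HN].
Qed.

Lemma goodN F : good F -> good (fun x => - F x).
Proof.
move=> [mF [M HM]]; split; first exact: measurableT_comp.
by exists M => x Dx; rewrite normrN; exact: HM.
Qed.

Lemma goodM F G : good F -> good G -> good (fun x => F x * G x).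
Proof.
move=> [mF [M HM]] [mG [N HN]]; split; first exact: measurable_realfun.measurable_funM.
exists (M * N) => x Dx; rewrite normrM.
apply: ler_pM => //; [exact: HM|exact: HN].
Qed.

Lemma good_sum (I : Type) (r : seq I) (P : pred I) (F : I -> R -> R) :
  (forall i, good (F i)) -> good (fun x => \sum_(i <- r | P i) F i x).
Proof.
move=> gF; elim: r => [|i r IH].
  by move: (good_cst 0); apply: good_eq => x; rewrite big_nil.
case Pi: (P i).
  by move: (goodD (gF i) IH); apply: good_eq => x; rewrite big_cons Pi.
by move: IH; apply: good_eq => x; rewrite big_cons Pi.
Qed.

Lemma good_poly (P : {poly R}) : good (horner P).
Proof.
elim/poly_ind: P => [|P c IH].
  by move: (good_cst 0); apply: good_eq => x; rewrite horner0.
move: (goodD (goodM IH good_id) (good_cst c)); apply: good_eq => x.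
by rewrite hornerMXaddC.
Qed.

End Good.
Section Ana2.
Variable R : realType.
Variable h : R.
Hypothesis h0 : 0 < h.
Local Notation D := [set` `[0, h]].
Local Notation mu := (@lebesgue_measure R).

Lemma ftc_poly (P : {poly R}) :
  \int[mu]_(x in D) (P^`()).[x] = P.[h] - P.[0].
Proof.
rewrite /Rintegral (@continuous_FTC2 R (horner P^`()) (horner P) 0 h h0) //.
- apply: continuous_subspaceT => x; exact: continuous_horner.
- split.
  + move=> x _; exact: derivable_horner.
  + apply: cvg_at_right_filter; exact: continuous_horner.
  + apply: cvg_at_left_filter; exact: continuous_horner.
- by move=> x _; rewrite derivE.
Qed.

Lemma int_L2 (f G : R -> R) : measurable_fun D f ->
  mu.-integrable D (fun x => ((f x) ^+ 2)%:E) -> good h G ->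
  mu.-integrable D (EFin \o (fun x => f x * G x)).
Proof.
move=> mf if2 [mG [M HM]].
have i1 := good_int h0 (good_cst h 1).
have := @integrableZl _ _ R mu D (mD h) (`|M| + 1) _ (@integrableD _ _ R mu D (mD h) _ _ i1 if2).
apply: (@le_integrable _ _ R mu D (mD h)).
  by apply/measurable_realfun.measurable_EFinP; exact: measurable_realfun.measurable_funM.
move=> x Dx /=; rewrite lee_fin normrM.
have hf : `|f x| <= 1 + f x ^+ 2.
  rewrite -real_normK ?num_real //.
  by nra.
have hG : `|G x| <= `|M| + 1.
  by apply: le_trans (HM x Dx) _; apply: le_trans (ler_norm M) _; rewrite lerDl.
have -> : `|(`|M| + 1) * (1 + f x ^+ 2)| = (`|M| + 1) * (1 + f x ^+ 2).
  by apply: ger0_norm; apply: mulr_ge0; [apply: addr_ge0|apply: addr_ge0; rewrite ?sqr_ge0].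
rewrite mulrC; apply: ler_pM => //.
Qed.

Lemma meas_inv (g : R -> R) : measurable_fun D g -> measurable_fun D (fun x => (g x)^-1).
Proof.
move=> mg.
have m2 : measurable_fun D (fun x => g x * (expR \o (-%R \o (@ln R \o (fun x => g x * g x)))) x).
  apply: measurable_realfun.measurable_funM => //.
  apply: measurableT_comp => //.
  apply: measurableT_comp; first exact: measurable_realfun.oppr_measurable.
  apply: measurableT_comp; first exact: measurable_realfun.measurable_ln.
  exact: measurable_realfun.measurable_funM.
apply: eq_measurable_fun m2 => x _ /=.
have [->|gx0] := eqVneq (g x) 0; first by rewrite mul0r invr0.
rewrite expRN lnK; last by rewrite posrE -expr2 exprn_even_gt0.
by rewrite invfM mulrA divff // mul1r.
Qed.

Lemma meas_det n (M : R -> 'M[R]_n) :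
  (forall i j, measurable_fun D (fun x => M x i j)) ->
  measurable_fun D (fun x => \det (M x)).
Proof.
move=> mM; rewrite /determinant.
apply: measurable_sum => s.
apply: measurable_realfun.measurable_funM; first exact: measurable_cst.
apply: measurable_prod => i _; exact: mM.
Qed.

Lemma meas_invmx n (M : R -> 'M[R]_n) :
  (forall i j, measurable_fun D (fun x => M x i j)) ->
  (forall x, D x -> M x \in unitmx) ->
  forall i j, measurable_fun D (fun x => invmx (M x) i j).
Proof.
move=> mM uM i j.
have m2 : measurable_fun D (fun x => (\det (M x))^-1 * cofactor (M x) j i).
  apply: measurable_realfun.measurable_funM; first by apply: meas_inv; apply: meas_det.
  rewrite /cofactor; apply: measurable_realfun.measurable_funM; first exact: measurable_cst.
  apply: meas_det => a b; apply: eq_measurable_fun (mM (lift j a) (lift i b)) => x _.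
  by rewrite !mxE.
apply: eq_measurable_fun m2 => x /set_mem Dx.
by rewrite /invmx uM // !mxE.
Qed.

End Ana2.
Section Lin.
Variable R : realType.
Implicit Types a b c v : 'cV[R]_3.

Lemma dot3E a b : dot3 a b = (a^T *m b) 0 0.
Proof. by rewrite /dot3 !mxE; apply: eq_bigr => i _; rewrite !mxE. Qed.

Lemma dot3C a b : dot3 a b = dot3 b a.
Proof. by rewrite /dot3; apply: eq_bigr => i _; rewrite mulrC. Qed.

Lemma dot3Dl a b c : dot3 (a + b) c = dot3 a c + dot3 b c.
Proof. by rewrite /dot3 -big_split; apply: eq_bigr => i _; rewrite !mxE mulrDl. Qed.

Lemma dot3Dr a b c : dot3 a (b + c) = dot3 a b + dot3 a c.
Proof. by rewrite dot3C dot3Dl !(dot3C a). Qed.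

Lemma dot3Zl t a b : dot3 (t *: a) b = t * dot3 a b.
Proof. by rewrite /dot3 mulr_sumr; apply: eq_bigr => i _; rewrite !mxE mulrA. Qed.

Lemma dot3Zr t a b : dot3 a (t *: b) = t * dot3 a b.
Proof. by rewrite dot3C dot3Zl dot3C. Qed.

Lemma dot3Nl a b : dot3 (- a) b = - dot3 a b.
Proof. by rewrite -scaleN1r dot3Zl mulN1r. Qed.

Lemma dot30l b : dot3 0 b = 0.
Proof. by rewrite /dot3 big1 // => i _; rewrite mxE mul0r. Qed.

Lemma dot30r b : dot3 b 0 = 0.
Proof. by rewrite dot3C dot30l. Qed.

Lemma dot3_ge0 a : 0 <= dot3 a a.
Proof. by rewrite /dot3 sumr_ge0 // => i _; rewrite -expr2 sqr_ge0. Qed.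

Lemma dot3_coord a i : (a i 0) ^+ 2 <= dot3 a a.
Proof.
rewrite /dot3 (bigD1 i) //= -expr2 lerDl sumr_ge0 // => k _.
by rewrite -expr2 sqr_ge0.
Qed.

Lemma dot3_eq0 a : dot3 a a = 0 -> a = 0.
Proof.
move=> H; apply/matrixP => i j; rewrite (ord1 j) mxE.
have := dot3_coord a i; rewrite H => h1.
by apply/eqP; rewrite -sqrf_eq0 eq_le h1 sqr_ge0.
Qed.

Lemma dot3_delta a j : dot3 (delta_mx j 0) a = a j 0.
Proof.
rewrite /dot3 (bigD1 j) //= big1 ?addr0 => [|k kj]; first by rewrite mxE !eqxx mul1r.
by rewrite mxE (negPf kj) mul0r.
Qed.

Lemma sum3 (F : 'I_3 -> R) : \sum_i F i = F c0 + F c1 + F c2.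
Proof.
rewrite !big_ord_recl big_ord0 addr0 addrA.
have -> : c0 = ord0 by apply: val_inj; rewrite /= inordK.
have -> : c1 = lift ord0 ord0 by apply: val_inj; rewrite /= inordK.
by have -> : c2 = lift ord0 (lift ord0 ord0) by apply: val_inj; rewrite /= inordK.
Qed.

Lemma cross3_0 a b : cross3 a b c0 0 = a c1 0 * b c2 0 - a c2 0 * b c1 0.
Proof. by rewrite mxE /= inordK. Qed.
Lemma cross3_1 a b : cross3 a b c1 0 = a c2 0 * b c0 0 - a c0 0 * b c2 0.
Proof. by rewrite mxE /= inordK. Qed.
Lemma cross3_2 a b : cross3 a b c2 0 = a c0 0 * b c1 0 - a c1 0 * b c0 0.
Proof. by rewrite mxE /= inordK. Qed.

Lemma cross3_anti a b c : dot3 (cross3 a b) c + dot3 (cross3 a c) b = 0.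
Proof.
rewrite /dot3 !sum3 !cross3_0 !cross3_1 !cross3_2; ring.
Qed.

Section Form.
Variable C : 'M[R]_3.
Hypothesis Csym : C^T = C.
Variables al be : R.
Hypothesis al0 : 0 < al.
Hypothesis be0 : 0 < be.
Hypothesis Cbnd : forall xi : 'cV[R]_3,
  al * dot3 xi xi <= dot3 (C *m xi) xi /\ dot3 (C *m xi) xi <= be * dot3 xi xi.

Let q a b := dot3 (C *m a) b.

Lemma q_sym a b : q a b = q b a.
Proof.
rewrite /q !dot3E !trmx_mul Csym.
have -> : b^T *m C *m a = (a^T *m C *m b)^T by rewrite !trmx_mul trmxK Csym mulmxA.
by rewrite [RHS]mxE.
Qed.

Lemma q_ge0 a : 0 <= q a a.
Proof.
have [h1 _] := Cbnd a; apply: le_trans h1.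
apply: mulr_ge0; [exact: ltW | exact: dot3_ge0].
Qed.

Lemma q_eq0 a : q a a = 0 -> a = 0.
Proof.
move=> H; apply: dot3_eq0; have [h1 _] := Cbnd a.
have := dot3_ge0 a; rewrite /q in H; rewrite H in h1.
move=> h2; apply/eqP; rewrite eq_le h2 andbT.
by rewrite -(pmulr_rle0 _ al0).
Qed.

Lemma q_expand a b t : q (a + t *: b) (a + t *: b) = q a a + 2 * t * q a b + t ^+ 2 * q b b.
Proof.
rewrite /q mulmxDr -scalemxAr dot3Dl !dot3Dr !dot3Zl !dot3Zr.
have : q b a = q a b by rewrite q_sym.
rewrite /q => ->; ring.
Qed.

Lemma q_CS a b : q a b ^+ 2 <= q a a * q b b.
Proof.
have [bb0|bbn0] := eqVneq (q b b) 0.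
  by rewrite (q_eq0 bb0) /q mulmx0 dot30l dot30r expr0n /= mulr0.
have bbp : 0 < q b b by rewrite lt_def bbn0 q_ge0.
pose t := - q a b / q b b.
have := q_ge0 (a + t *: b); rewrite q_expand.
have tE : t * q b b = - q a b by rewrite /t mulrAC -mulrA divff // mulr1.
move=> H.
have H2 : 0 <= (q a a + 2 * t * q a b + t ^+ 2 * q b b) * q b b by rewrite mulr_ge0 // ltW.
have : (q a a + 2 * t * q a b + t ^+ 2 * q b b) * q b b = q a a * q b b - q a b ^+ 2.
  have -> : (q a a + 2 * t * q a b + t ^+ 2 * q b b) * q b b =
    q a a * q b b + 2 * q a b * (t * q b b) + (t * q b b) ^+ 2 by ring.
  rewrite tE; ring.
by move=> E; rewrite E subr_ge0 in H2.
Qed.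

Lemma C_unit : C \in unitmx.
Proof.
rewrite unitmxE unitfE; apply/negP => /det0P [v vn0 vC].
have : C *m v^T = 0 by rewrite -Csym -trmx_mul vC trmx0.
move=> Cv; have := q_eq0 (a := v^T); rewrite /q Cv dot30l => /(_ erefl) vt0.
by move: vn0; rewrite -[v]trmxK vt0 trmx0 eqxx.
Qed.

Lemma Cinv_ge0 v : 0 <= dot3 (invmx C *m v) v.
Proof.
have := q_ge0 (invmx C *m v); rewrite /q mulKVmx ?C_unit //.
by rewrite dot3C.
Qed.

Lemma Cinv_bnd v : dot3 v v <= be * dot3 (invmx C *m v) v.
Proof.
pose e := invmx C *m v.
have Ce : C *m e = v by rewrite /e mulKVmx ?C_unit.
have E1 : dot3 (invmx C *m v) v = q e e by rewrite /q Ce dot3C.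
have E2 : dot3 v v = q e (C *m e) by rewrite /q Ce.
have E3 : q (C *m e) (C *m e) <= be * dot3 v v by rewrite /q Ce; have [_ ->] := Cbnd v.
have cs := q_CS e (C *m e).
rewrite E1; have vv0 := dot3_ge0 v.
have ee0 := q_ge0 e.
have [vz|vp] := eqVneq (dot3 v v) 0; first by rewrite vz mulr_ge0 // ltW.
have vpos : 0 < dot3 v v by rewrite lt_def vp vv0.
rewrite -E2 in cs.
have : dot3 v v ^+ 2 <= q e e * (be * dot3 v v).
  by apply: le_trans cs _; apply: ler_wpM2l.
rewrite expr2 mulrA => H.
by rewrite -(ler_pM2r vpos) (mulrC be).
Qed.

Lemma Cinv_entry i j : `|invmx C i j| <= 1 + al^-2.
Proof.
pose e : 'cV[R]_3 := invmx C *m delta_mx j 0.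
have Ce : C *m e = delta_mx j 0 by rewrite /e mulKVmx ?C_unit.
have Eij : invmx C i j = e i 0 by rewrite /e -colE mxE.
have [h1 _] := Cbnd e; rewrite Ce dot3_delta in h1.
have hj := dot3_coord e j; have hi := dot3_coord e i.
have ee0 := dot3_ge0 e.
have h2 : e j 0 <= al^-1.
  have [ej0|ej0] := leP (e j 0) 0; first by apply: le_trans ej0 _; rewrite invr_ge0 ltW.
  rewrite -(ler_pM2l al0) mulfV ?gt_eqF //.
  have : al * e j 0 ^+ 2 <= e j 0 by apply: le_trans h1; apply: ler_wpM2l; [exact: ltW | exact: hj].
  by move=> H; rewrite -(ler_pM2r ej0) mul1r; rewrite expr2 mulrA in H.
have h3 : dot3 e e <= al^-2.
  rewrite -(ler_pM2l al0) expr2 invfM mulrA mulfV ?gt_eqF // mul1r.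
  by apply: le_trans h1 h2.
rewrite Eij; apply: le_trans (_ : 1 + e i 0 ^+ 2 <= _); last by rewrite lerD2l (le_trans hi).
rewrite -real_normK ?num_real //; nra.
Qed.

End Form.
End Lin.
Section Poly.
Variable R : realType.
Local Notation mu := (@lebesgue_measure R).

Lemma sum3g (V : nmodType) (F : 'I_3 -> V) : \sum_i F i = F c0 + F c1 + F c2.
Proof.
rewrite !big_ord_recl big_ord0 addr0 addrA.
have -> : c0 = ord0 by apply: val_inj; rewrite /= inordK.
have -> : c1 = lift ord0 ord0 by apply: val_inj; rewrite /= inordK.
by have -> : c2 = lift ord0 (lift ord0 ord0) by apply: val_inj; rewrite /= inordK.
Qed.

Definition dotp (P Q : polyvec R) : {poly R} := \sum_i P i 0 * Q i 0.

Lemma dotpE P Q x : dot3 (evalv P x) (evalv Q x) = (dotp P Q).[x].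
Proof. by rewrite /dot3 /dotp horner_sum; apply: eq_bigr => i _; rewrite !mxE hornerM. Qed.

Lemma deriv_dotp P Q : (dotp P Q)^`() = dotp (derivv P) Q + dotp P (derivv Q).
Proof.
rewrite /dotp !sum3g /derivv !mxE !derivD !derivM; ring.
Qed.

Lemma ftc_poly_ab (P : {poly R}) a b : a < b ->
  \int[mu]_(x in `[a, b]) (P^`()).[x] = P.[b] - P.[a].
Proof.
move=> ab.
rewrite /Rintegral (@continuous_FTC2 R (horner P^`()) (horner P) a b ab) //.
- apply: continuous_subspaceT => x; exact: continuous_horner.
- split.
  + move=> x _; exact: derivable_horner.
  + apply: cvg_at_right_filter; exact: continuous_horner.
  + apply: cvg_at_left_filter; exact: continuous_horner.
- by move=> x _; rewrite derivE.
Qed.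

Lemma poly_eq0_on (P : {poly R}) (h : R) : 0 < h ->
  (forall x, 0 < x -> x <= h -> P.[x] = 0) -> P = 0.
Proof.
move=> h0 HP; apply/eqP; apply/negPn/negP => Pn0.
pose rs := [seq h / (k.+1)%:R | k <- iota 0 (size P)].
suff : (size rs < size P)%N by rewrite size_map size_iota ltnn.
apply: (max_poly_roots Pn0).
- apply/allP => y /mapP [k _ ->]; apply/rootP; apply: HP.
    by rewrite divr_gt0 // ltr0n.
  rewrite ler_pdivrMr ?ltr0n // ler_peMr ?ler1n //.
  by rewrite le_eqVlt h0 orbT.
- have inj : injective (fun k : nat => h / (k.+1)%:R).
    move=> m n /= E.
    have E2 : ((m.+1)%:R^-1 : R) = (n.+1)%:R^-1 := mulfI (lt0r_neq0 h0) E.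
    have E3 : ((m.+1)%:R : R) = (n.+1)%:R by apply: invr_inj.
    by move/eqP: E3; rewrite eqr_nat eqSS => /eqP.
  by rewrite map_inj_uniq ?iota_uniq.
Qed.

Definition prim (P : {poly R}) : {poly R} :=
  \poly_(i < (size P).+1) (if i is j.+1 then P`_j / (j.+1)%:R else 0).

Lemma prim_deriv P : (prim P)^`() = P.
Proof.
apply/polyP => i; rewrite coef_deriv coef_poly ltnS.
case: ltnP => iP.
  by rewrite /= -[_ *+ i.+1]mulr_natr divfK // pnatr_eq0.
by rewrite mul0rn nth_default.
Qed.

Lemma deriv_eq0 (P : {poly R}) : P^`() = 0 -> P = (P`_0)%:P.
Proof.
move=> H; apply/polyP => i; rewrite coefC.
case: i => [|i] //=.
have := congr1 (fun q : {poly R} => q`_i) H; rewrite coef_deriv coef0 => /eqP.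
by rewrite mulrn_eq0 /= => /eqP.
Qed.

Lemma deriv_Vp p (P : polyvec R) : in_Vp p P -> in_Vp p (derivv P).
Proof.
move=> HP i; rewrite mxE; have [->|Pn0] := eqVneq (P i 0) 0.
  by rewrite deriv0 size_poly0.
by apply: leq_trans (ltnW (lt_size_deriv Pn0)) (HP i).
Qed.

Section OnH.
Variable h : R.
Hypothesis h0 : 0 < h.
Local Notation D := [set` `[0, h]].

Lemma ip_polyE (P Q : polyvec R) :
  ip_e h (evalv P) (evalv Q) = \int[mu]_(x in D) (dotp P Q).[x].
Proof. by rewrite /ip_e; apply: eq_Rintegral => x _; rewrite dotpE. Qed.

Lemma dotp_ge0 (P : polyvec R) x : 0 <= (dotp P P).[x].
Proof. by rewrite -dotpE dot3_ge0. Qed.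

Lemma ip_sq_eq0 (P : polyvec R) : ip_e h (evalv P) (evalv P) = 0 -> P = 0.
Proof.
rewrite ip_polyE => H.
set S := dotp P P in H.
pose Q := prim S.
have I0t t : 0 < t -> \int[mu]_(x in `[0, t]) S.[x] = Q.[t] - Q.[0].
  by move=> t0; rewrite -ftc_poly_ab // /Q prim_deriv.
have Qh : Q.[h] - Q.[0] = 0 by rewrite -I0t.
have Qt t : 0 < t -> t <= h -> Q.[t] = Q.[0].
  move=> t0; rewrite le_eqVlt => /predU1P [->|th]; first by apply/eqP; rewrite -subr_eq0 Qh.
  have A1 : 0 <= Q.[t] - Q.[0] by rewrite -I0t // Rintegral_ge0 // => x _; exact: dotp_ge0.
  have A2 : 0 <= Q.[h] - Q.[t].
    by rewrite -ftc_poly_ab // /Q prim_deriv Rintegral_ge0 // => x _; exact: dotp_ge0.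
  apply/eqP; rewrite -subr_eq0 eq_le A1 andbT.
  by move: A2; rewrite -[Q.[h]](subrK Q.[0]) Qh add0r subr_ge0 -subr_le0.
have Q0 : Q - (Q.[0])%:P = 0.
  by apply: (poly_eq0_on h0) => x x0 xh; rewrite hornerD hornerN hornerC Qt // subrr.
have S0 : S = 0.
  have := congr1 deriv Q0; rewrite derivB derivC subr0 /Q prim_deriv => ->.
  by rewrite deriv0.
have Px x i : (P i 0).[x] = 0.
  have := dotp_ge0 P x.
  have : (dotp P P).[x] = 0 by rewrite -/S S0 horner0.
  rewrite -dotpE => /dot3_eq0 /matrixP /(_ i 0); rewrite !mxE => -> _ //.
apply/matrixP => i j; rewrite (ord1 j) mxE.
by apply: (poly_eq0_on h0) => x _ _; exact: Px.
Qed.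

End OnH.
End Poly.
Section Main.
Variable R : realType.
Variable h : R.
Hypothesis h0 : 0 < h.
Local Notation D := [set` `[0, h]].
Local Notation mu := (@lebesgue_measure R).
Local Notation ip := (ip_e h).
Local Notation ev := (@evalv R).

Definition goodv (F : R -> 'cV[R]_3) := forall i, good h (fun x => F x i 0).
Definition ipair (F G : R -> 'cV[R]_3) :=
  mu.-integrable D (EFin \o (fun x => dot3 (F x) (G x))).

Lemma good_dot3 F G : goodv F -> goodv G -> good h (fun x => dot3 (F x) (G x)).
Proof.
move=> gF gG.
apply: (good_eq (F := fun x => \sum_(i <- index_enum 'I_3 | xpredT i) F x i 0 * G x i 0)) => //.
by apply: good_sum => i; apply: goodM.
Qed.

Lemma goodv_ipair F G : goodv F -> goodv G -> ipair F G.
Proof. by move=> gF gG; apply: good_int => //; apply: good_dot3. Qed.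

Lemma ip_ext_linl F F1 F2 G c : (forall x, F x = c *: F1 x + F2 x) ->
  ipair F1 G -> ipair F2 G -> ip F G = c * ip F1 G + ip F2 G.
Proof.
move=> E i1 i2; rewrite /ip_e.
transitivity (\int[mu]_(x in D) (c * dot3 (F1 x) (G x) + dot3 (F2 x) (G x))).
  by apply: eq_Rintegral => x _; rewrite E dot3Dl dot3Zl.
by rewrite RintD ?RintZ //; exact: intZ.
Qed.

Lemma ip_ext_linr F G G1 G2 c : (forall x, G x = c *: G1 x + G2 x) ->
  ipair F G1 -> ipair F G2 -> ip F G = c * ip F G1 + ip F G2.
Proof.
move=> E i1 i2; rewrite /ip_e.
transitivity (\int[mu]_(x in D) (c * dot3 (F x) (G1 x) + dot3 (F x) (G2 x))).
  by apply: eq_Rintegral => x _; rewrite E dot3Dr dot3Zr.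
by rewrite RintD ?RintZ //; exact: intZ.
Qed.

Lemma goodv_ev (P : polyvec R) : goodv (ev P).
Proof. by move=> i; apply: good_eq (good_poly h (P i 0)) => x; rewrite mxE. Qed.

Lemma ipair_L2 (f : R -> 'cV[R]_3) (P : polyvec R) :
  (forall i, measurable_fun D (fun x => f x i 0) /\
      mu.-integrable D (fun x => ((f x i 0) ^+ 2)%:E)) ->
  ipair f (ev P).
Proof.
move=> Hf; rewrite /ipair.
have Hi i : mu.-integrable D (EFin \o (fun x => f x i 0 * ev P x i 0)).
  have [m1 m2] := Hf i; apply: int_L2 => //; exact: goodv_ev.
apply: (@eq_integrable _ _ R mu D (mD h) _ _ _ (intD (intD (Hi c0) (Hi c1)) (Hi c2))).
by move=> x _; rewrite /= /dot3 sum3.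
Qed.

Definition plin (c : R) (P1 P2 : polyvec R) : polyvec R := c%:P *: P1 + P2.

Lemma ev_plin c P1 P2 x : ev (plin c P1 P2) x = c *: ev P1 x + ev P2 x.
Proof. by apply/matrixP => i j; rewrite !mxE hornerD hornerCM. Qed.

Lemma derivv_plin c P1 P2 : derivv (plin c P1 P2) = plin c (derivv P1) (derivv P2).
Proof. by apply/matrixP => i j; rewrite !mxE derivD deriv_mulC. Qed.

Lemma cross3_lin (a : 'cV[R]_3) c u v : cross3 a (c *: u + v) = c *: cross3 a u + cross3 a v.
Proof.
apply/matrixP => i j; rewrite !mxE.
by case: ifP => _; [|case: ifP => _]; ring.
Qed.

Lemma goodv_cross (a : 'cV[R]_3) F : goodv F -> goodv (fun x => cross3 a (F x)).
Proof.
move=> gF i.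
apply: (good_eq (F := fun x => if nat_of_ord i == 0%N then a c1 0 * F x c2 0 - a c2 0 * F x c1 0
     else if nat_of_ord i == 1%N then a c2 0 * F x c0 0 - a c0 0 * F x c2 0
     else a c0 0 * F x c1 0 - a c1 0 * F x c0 0)).
  by move=> x; rewrite mxE.
case: (nat_of_ord i == 0%N); last case: (nat_of_ord i == 1%N).
all: apply: goodD; [apply: goodM; [exact: good_cst|exact: gF]
   | apply: goodN; apply: goodM; [exact: good_cst|exact: gF]].
Qed.

End Main.
Section CSec.
Variable R : realType.
Variable h : R.
Hypothesis h0 : 0 < h.
Local Notation D := [set` `[0, h]].
Local Notation mu := (@lebesgue_measure R).
Local Notation ip := (ip_e h).
Local Notation ev := (@evalv R).
Variable C : R -> 'M[R]_3.
Variables al be : R.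
Hypothesis al0 : 0 < al.
Hypothesis be0 : 0 < be.
Hypothesis Csym : forall x, x \in `[0, h] -> (C x)^T = C x.
Hypothesis Cbnd : forall x, x \in `[0, h] -> forall xi : 'cV[R]_3,
      al * dot3 xi xi <= dot3 (C x *m xi) xi /\ dot3 (C x *m xi) xi <= be * dot3 xi xi.
Hypothesis Cmeas : forall i j, measurable_fun `[0, h] (fun x => C x i j).

Lemma Cinv_good i j : good h (fun x => invmx (C x) i j).
Proof.
split.
  apply: meas_invmx => // x Dx.
  exact: (C_unit (Csym Dx) al0 (Cbnd Dx)).
exists (1 + al^-2) => x Dx.
exact: (Cinv_entry (Csym Dx) al0 (Cbnd Dx)).
Qed.

Lemma goodv_Cinv n : goodv h (fun x => invmx (C x) *m ev n x).
Proof.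
move=> i.
apply: (good_eq (F := fun x => \sum_(j <- index_enum 'I_3 | xpredT j) invmx (C x) i j * ev n x j 0)).
  by move=> x; rewrite mxE.
apply: good_sum => j; apply: goodM; first exact: Cinv_good.
exact: goodv_ev.
Qed.

Lemma ipC_ge0 n : 0 <= ip (fun x => invmx (C x) *m ev n x) (ev n).
Proof.
apply: Rintegral_ge0 => x Dx.
exact: (Cinv_ge0 (Csym Dx) al0 (Cbnd Dx)).
Qed.

Lemma ipC_eq0 n : ip (fun x => invmx (C x) *m ev n x) (ev n) = 0 -> n = 0.
Proof.
move=> H; apply: (ip_sq_eq0 h0); apply/eqP; rewrite eq_le; apply/andP; split; last first.
  by apply: Rintegral_ge0 => x _; exact: dot3_ge0.
have -> : 0 = be * ip (fun x => invmx (C x) *m ev n x) (ev n) by rewrite H mulr0.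
rewrite /ip_e -RintZ //; last first.
  by apply: goodv_ipair => //; [exact: goodv_Cinv|exact: goodv_ev].
apply: (@le_Rintegral _ _ R mu D _ _ (mD h)).
- by apply: goodv_ipair => //; exact: goodv_ev.
- apply: intZ; apply: goodv_ipair => //; [exact: goodv_Cinv|exact: goodv_ev].
move=> x Dx.
exact: (Cinv_bnd (Csym Dx) al0 be0 (Cbnd Dx)).
Qed.

End CSec.
Section Zero.
Variable R : realType.
Variable h : R.
Local Notation D := [set` `[0, h]].
Local Notation mu := (@lebesgue_measure R).

Lemma Rint0 (f : R -> R) : (forall x, f x = 0) -> \int[mu]_(x in D) f x = 0.
Proof. by move=> H; rewrite /Rintegral integral0_eq // => x _; rewrite H. Qed.

Lemma ip0l F G : (forall x, F x = 0) -> ip_e h F G = 0.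
Proof. by move=> H; apply: Rint0 => x; rewrite H dot30l. Qed.

Lemma ip0r F G : (forall x, G x = 0) -> ip_e h F G = 0.
Proof. by move=> H; apply: Rint0 => x; rewrite H dot30r. Qed.

Lemma ipC F G : ip_e h F G = ip_e h G F.
Proof. by apply: eq_Rintegral => x _; rewrite dot3C. Qed.

Lemma ev0 x : evalv (0 : polyvec R) x = 0.
Proof. by apply/matrixP => i j; rewrite !mxE horner0. Qed.

Lemma derivv0 : derivv (0 : polyvec R) = 0.
Proof. by apply/matrixP => i j; rewrite !mxE deriv0. Qed.

Lemma ip_ev0r F : ip_e h F (evalv 0) = 0.
Proof. by apply: ip0r => x; rewrite ev0. Qed.

Lemma bd_ev0r F : bd_e h F (evalv 0) = 0.
Proof. by rewrite /bd_e !ev0 !dot30r addr0. Qed.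

End Zero.
Section IBP.
Variable R : realType.
Variable h : R.
Hypothesis h0 : 0 < h.
Local Notation D := [set` `[0, h]].
Local Notation mu := (@lebesgue_measure R).
Local Notation ip := (ip_e h).
Local Notation ev := (@evalv R).

Lemma ibp (r q : polyvec R) :
  ip (ev r) (ev (derivv q)) + ip (ev (derivv r)) (ev q) =
  dot3 (ev r h) (ev q h) - dot3 (ev r 0) (ev q 0).
Proof.
rewrite !ip_polyE // -RintD; try by apply: good_int => //; exact: good_poly.
rewrite !dotpE -(ftc_poly_ab _ h0).
by apply: eq_Rintegral => x _; rewrite deriv_dotp hornerD addrC.
Qed.

Lemma ibp_zero p (r : polyvec R) : in_Vp p r -> ev r 0 = 0 -> ev r h = 0 ->
  (forall q, in_Vp p q -> ip (ev r) (ev (derivv q)) = 0) -> r = 0.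
Proof.
move=> rV r0 rh H.
have := ibp r (derivv r); rewrite (H _ (deriv_Vp rV)) add0r r0 rh !dot30l subrr.
move=> /(ip_sq_eq0 h0) dr.
apply/matrixP => i j; rewrite (ord1 j) mxE.
have di : (r i 0)^`() = 0 by have := congr1 (fun M : polyvec R => M i 0) dr; rewrite !mxE.
rewrite (deriv_eq0 di).
have := congr1 (fun M : 'cV[R]_3 => M i 0) r0; rewrite !mxE (deriv_eq0 di) hornerC => ->.
by rewrite polyC0 coef0 polyC0.
Qed.

End IBP.
Section Sys.
Variable R : realType.
Variable h : R.
Hypothesis h0 : 0 < h.
Local Notation D := [set` `[0, h]].
Local Notation mu := (@lebesgue_measure R).
Local Notation ip := (ip_e h).
Local Notation ev := (@evalv R).
Variable ie : 'cV[R]_3.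
Variables (Cn Cm : R -> 'M[R]_3) (an bn am bm : R).
Hypotheses (han : 0 < an) (hbn : 0 < bn) (ham : 0 < am) (hbm : 0 < bm).
Hypothesis Cn_sym : forall x, x \in `[0, h] -> (Cn x)^T = Cn x.
Hypothesis Cm_sym : forall x, x \in `[0, h] -> (Cm x)^T = Cm x.
Hypothesis Cn_bnd : forall x, x \in `[0, h] -> forall xi : 'cV[R]_3,
      an * dot3 xi xi <= dot3 (Cn x *m xi) xi /\ dot3 (Cn x *m xi) xi <= bn * dot3 xi xi.
Hypothesis Cm_bnd : forall x, x \in `[0, h] -> forall xi : 'cV[R]_3,
      am * dot3 xi xi <= dot3 (Cm x *m xi) xi /\ dot3 (Cm x *m xi) xi <= bm * dot3 xi xi.
Hypothesis Cn_meas : forall i j, measurable_fun `[0, h] (fun x => Cn x i j).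
Hypothesis Cm_meas : forall i j, measurable_fun `[0, h] (fun x => Cm x i j).
Variables (p : nat) (tau : R).
Hypothesis htau : 0 < tau.
Variables (ubk ubl rbk rbl : 'cV[R]_3) (f g : R -> 'cV[R]_3).
Hypothesis f_L2 : forall i, measurable_fun `[0, h] (fun x => f x i ord0) /\
      (lebesgue_measure : measure _ R).-integrable `[0, h] (fun x => ((f x i ord0) ^+ 2)%:E).
Hypothesis g_L2 : forall i, measurable_fun `[0, h] (fun x => g x i ord0) /\
      (lebesgue_measure : measure _ R).-integrable `[0, h] (fun x => ((g x i ord0) ^+ 2)%:E).

Local Notation tup := (polyvec R * polyvec R * polyvec R * polyvec R)%type.

Definition E1 (S : tup) (pp : polyvec R) :=
  - ip (fun x => invmx (Cn x) *m ev S.1.2 x) (ev pp) + ip (ev S.1.1.1) (ev (derivv pp))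
  - ip (fun x => cross3 ie (ev S.1.1.2 x)) (ev pp).
Definition E2 (S : tup) (qq : polyvec R) :=
  - ip (fun x => invmx (Cm x) *m ev S.2 x) (ev qq) + ip (ev S.1.1.2) (ev (derivv qq)).
Definition E3 (S : tup) (vv : polyvec R) :=
  ip (ev (derivv S.1.2)) (ev vv) + tau * bd_e h (ev S.1.1.1) (ev vv).
Definition E4 (S : tup) (ww : polyvec R) :=
  ip (fun x => cross3 ie (ev S.1.2 x)) (ev ww) + ip (ev (derivv S.2)) (ev ww)
  + tau * bd_e h (ev S.1.1.2) (ev ww).
Definition bdnu (ak al : 'cV[R]_3) (B : polyvec R) := - dot3 ak (evalv B 0) + dot3 al (evalv B h).
Definition bdn (ak al : 'cV[R]_3) (B : polyvec R) := dot3 ak (evalv B 0) + dot3 al (evalv B h).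
Definition L3 (vv : polyvec R) := ip f (ev vv) + tau * bdn ubk ubl vv.
Definition L4 (ww : polyvec R) := ip g (ev ww) + tau * bdn rbk rbl ww.

Definition Bf (S T : tup) := E1 S T.1.1.1 + E2 S T.1.1.2 + E3 S T.1.2 + E4 S T.2.
Definition Lf (T : tup) := bdnu ubk ubl T.1.1.1 + bdnu rbk rbl T.1.1.2 + L3 T.1.2 + L4 T.2.
Definition Vp4 (S : tup) := [/\ in_Vp p S.1.1.1, in_Vp p S.1.1.2, in_Vp p S.1.2 & in_Vp p S.2].

Lemma Vp0 : in_Vp p (0 : polyvec R).
Proof. by move=> i; rewrite mxE size_poly0. Qed.

Lemma E1_0 S : E1 S 0 = 0.
Proof. rewrite /E1 derivv0 !ip_ev0r; lra. Qed.
Lemma E2_0 S : E2 S 0 = 0.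
Proof. rewrite /E2 derivv0 !ip_ev0r; lra. Qed.
Lemma E3_0 S : E3 S 0 = 0.
Proof. rewrite /E3 !ip_ev0r bd_ev0r; lra. Qed.
Lemma E4_0 S : E4 S 0 = 0.
Proof. rewrite /E4 !ip_ev0r bd_ev0r; lra. Qed.

Lemma cross3_0r (a : 'cV[R]_3) : cross3 a 0 = 0.
Proof.
apply/matrixP => i j; rewrite !mxE.
by case: ifP => _; [|case: ifP => _]; ring.
Qed.

Lemma hom (S : tup) : Vp4 S -> (forall T, Vp4 T -> Bf S T = 0) -> S = (0, 0, 0, 0).
Proof.
move: S => [[[u r] n] m] [/= uV rV nV mV] H.
have H1 pp : in_Vp p pp -> E1 (u, r, n, m) pp = 0.
  move=> ppV; have := H (pp, 0, 0, 0) (And4 ppV Vp0 Vp0 Vp0).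
  by rewrite /Bf /= E2_0 E3_0 E4_0 !addr0.
have H2 qq : in_Vp p qq -> E2 (u, r, n, m) qq = 0.
  move=> ppV; have := H (0, qq, 0, 0) (And4 Vp0 ppV Vp0 Vp0).
  by rewrite /Bf /= E1_0 E3_0 E4_0 add0r !addr0.
have H3 vv : in_Vp p vv -> E3 (u, r, n, m) vv = 0.
  move=> ppV; have := H (0, 0, vv, 0) (And4 Vp0 Vp0 ppV Vp0).
  by rewrite /Bf /= E1_0 E2_0 E4_0 !add0r addr0.
have H4 ww : in_Vp p ww -> E4 (u, r, n, m) ww = 0.
  move=> ppV; have := H (0, 0, 0, ww) (And4 Vp0 Vp0 Vp0 ppV).
  by rewrite /Bf /= E1_0 E2_0 E3_0 !add0r.
have e1 := H1 n nV; have e2 := H2 m mV; have e3 := H3 u uV; have e4 := H4 r rV.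
rewrite /E1 /= in e1; rewrite /E2 /= in e2; rewrite /E3 /= in e3; rewrite /E4 /= in e4.
have sym1 : ip (ev u) (ev (derivv n)) = ip (ev (derivv n)) (ev u) by exact: ipC.
have sym2 : ip (ev r) (ev (derivv m)) = ip (ev (derivv m)) (ev r) by exact: ipC.
have anti : ip (fun x => cross3 ie (ev r x)) (ev n) + ip (fun x => cross3 ie (ev n x)) (ev r) = 0.
  rewrite /ip_e -RintD //; first by apply: Rint0 => x; exact: cross3_anti.
    by apply: goodv_ipair => //; [apply: goodv_cross; exact: goodv_ev|exact: goodv_ev].
  by apply: goodv_ipair => //; [apply: goodv_cross; exact: goodv_ev|exact: goodv_ev].
have bdu : 0 <= bd_e h (ev u) (ev u) by rewrite /bd_e addr_ge0 ?dot3_ge0.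
have bdr : 0 <= bd_e h (ev r) (ev r) by rewrite /bd_e addr_ge0 ?dot3_ge0.
have pn := ipC_ge0 han Cn_sym Cn_bnd n.
have pm := ipC_ge0 ham Cm_sym Cm_bnd m.
set A := ip (fun x => invmx (Cn x) *m ev n x) (ev n) in e1 pn.
set B := ip (fun x => invmx (Cm x) *m ev m x) (ev m) in e2 pm.
set bu := bd_e h (ev u) (ev u) in e3 bdu.
set br := bd_e h (ev r) (ev r) in e4 bdr.
have tbu : 0 <= tau * bu by rewrite mulr_ge0 // ltW.
have tbr : 0 <= tau * br by rewrite mulr_ge0 // ltW.
have tot : A + B + (tau * bu + tau * br) = 0 by lra.
have A0 : A = 0 by lra.
have B0 : B = 0 by lra.
have bu0 : bu = 0.
  by apply/eqP; rewrite -(mulrI_eq0 _ (lregP (lt0r_neq0 htau))); apply/eqP; lra.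
have br0 : br = 0.
  by apply/eqP; rewrite -(mulrI_eq0 _ (lregP (lt0r_neq0 htau))); apply/eqP; lra.
have n0 : n = 0 := ipC_eq0 h0 han hbn Cn_sym Cn_bnd Cn_meas A0.
have m0 : m = 0 := ipC_eq0 h0 ham hbm Cm_sym Cm_bnd Cm_meas B0.
move: bu0; rewrite /bu /bd_e => bu0.
move: br0; rewrite /br /bd_e => br0.
have u0 : ev u 0 = 0.
  apply: dot3_eq0; apply/eqP; rewrite eq_le dot3_ge0 andbT.
  by move: bu0; have := dot3_ge0 (ev u 0); have := dot3_ge0 (ev u h); lra.
have uh : ev u h = 0.
  apply: dot3_eq0; apply/eqP; rewrite eq_le dot3_ge0 andbT.
  by move: bu0; have := dot3_ge0 (ev u 0); have := dot3_ge0 (ev u h); lra.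
have r0 : ev r 0 = 0.
  apply: dot3_eq0; apply/eqP; rewrite eq_le dot3_ge0 andbT.
  by move: br0; have := dot3_ge0 (ev r 0); have := dot3_ge0 (ev r h); lra.
have rh : ev r h = 0.
  apply: dot3_eq0; apply/eqP; rewrite eq_le dot3_ge0 andbT.
  by move: br0; have := dot3_ge0 (ev r 0); have := dot3_ge0 (ev r h); lra.
subst n m.
have rz : r = 0.
  apply: (ibp_zero h0 rV r0 rh) => q qV.
  have := H2 q qV; rewrite /E2 /= ip0l ?oppr0 ?add0r // => x.
  by rewrite ev0 mulmx0.
subst r.
have uz : u = 0.
  apply: (ibp_zero h0 uV u0 uh) => q qV.
  have := H1 q qV; rewrite /E1 /= ip0l ?oppr0 ?add0r; last by move=> x; rewrite ev0 mulmx0.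
  by rewrite (@ip0l _ _ (fun x => cross3 ie (ev 0 x))) ?subr0 // => x; rewrite ev0 cross3_0r.
by rewrite uz.
Qed.


Hint Resolve goodv_ev : core.

Ltac absring :=
  repeat match goal with |- context [ip_e ?a ?b ?c] => let X := fresh "X" in set X := ip_e a b c end;
  repeat match goal with |- context [bd_e ?a ?b ?c] => let X := fresh "Y" in set X := bd_e a b c end;
  repeat match goal with |- context [dot3 ?b ?c] => let X := fresh "Z" in set X := dot3 b c end;
  ring.

Lemma gCn P : goodv h (fun x => invmx (Cn x) *m ev P x).
Proof. exact: (goodv_Cinv han Cn_sym Cn_bnd Cn_meas). Qed.
Lemma gCm P : goodv h (fun x => invmx (Cm x) *m ev P x).
Proof. exact: (goodv_Cinv ham Cm_sym Cm_bnd Cm_meas). Qed.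
Lemma gX P : goodv h (fun x => cross3 ie (ev P x)).
Proof. exact: goodv_cross. Qed.
Hint Resolve gCn gCm gX : core.

Lemma gip F G : goodv h F -> goodv h G -> ipair h F G.
Proof. exact: goodv_ipair. Qed.
Hint Resolve gip : core.

Lemma ipl_ev c a b G : goodv h G ->
  ip (ev (plin c a b)) G = c * ip (ev a) G + ip (ev b) G.
Proof. by move=> gG; apply: ip_ext_linl; [exact: ev_plin|auto|auto]. Qed.

Lemma ipr_ev c a b F : ipair h F (ev a) -> ipair h F (ev b) ->
  ip F (ev (plin c a b)) = c * ip F (ev a) + ip F (ev b).
Proof. by move=> i1 i2; apply: ip_ext_linr; [exact: ev_plin|auto|auto]. Qed.

Lemma ipl_Cn c a b G : goodv h G ->
  ip (fun x => invmx (Cn x) *m ev (plin c a b) x) G =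
  c * ip (fun x => invmx (Cn x) *m ev a x) G + ip (fun x => invmx (Cn x) *m ev b x) G.
Proof.
move=> gG; apply: ip_ext_linl; [move=> x|auto|auto].
by rewrite ev_plin mulmxDr scalemxAr.
Qed.

Lemma ipl_Cm c a b G : goodv h G ->
  ip (fun x => invmx (Cm x) *m ev (plin c a b) x) G =
  c * ip (fun x => invmx (Cm x) *m ev a x) G + ip (fun x => invmx (Cm x) *m ev b x) G.
Proof.
move=> gG; apply: ip_ext_linl; [move=> x|auto|auto].
by rewrite ev_plin mulmxDr scalemxAr.
Qed.

Lemma ipl_X c a b G : goodv h G ->
  ip (fun x => cross3 ie (ev (plin c a b) x)) G =
  c * ip (fun x => cross3 ie (ev a x)) G + ip (fun x => cross3 ie (ev b x)) G.
Proof.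
move=> gG; apply: ip_ext_linl; [move=> x|auto|auto].
by rewrite ev_plin cross3_lin.
Qed.

Lemma bdl c a b G : bd_e h (ev (plin c a b)) G = c * bd_e h (ev a) G + bd_e h (ev b) G.
Proof. rewrite /bd_e !ev_plin !dot3Dl !dot3Zl; ring. Qed.

Lemma bdr c a b F : bd_e h F (ev (plin c a b)) = c * bd_e h F (ev a) + bd_e h F (ev b).
Proof. rewrite /bd_e !ev_plin !dot3Dr !dot3Zr; ring. Qed.

Lemma bdnu_lin ak al c a b : bdnu ak al (plin c a b) = c * bdnu ak al a + bdnu ak al b.
Proof. rewrite /bdnu !ev_plin !dot3Dr !dot3Zr; ring. Qed.

Lemma bdn_lin ak al c a b : bdn ak al (plin c a b) = c * bdn ak al a + bdn ak al b.
Proof. rewrite /bdn !ev_plin !dot3Dr !dot3Zr; ring. Qed.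

Definition tlin (c : R) (S1 S2 : tup) : tup :=
  (plin c S1.1.1.1 S2.1.1.1, plin c S1.1.1.2 S2.1.1.2, plin c S1.1.2 S2.1.2, plin c S1.2 S2.2).

Lemma Bf_linl c S1 S2 T : Bf (tlin c S1 S2) T = c * Bf S1 T + Bf S2 T.
Proof.
rewrite /Bf /E1 /E2 /E3 /E4 /=.
rewrite !ipl_Cn ?ipl_Cm ?ipl_X ?ipl_ev ?derivv_plin ?ipl_ev ?bdl; try by auto.
absring.
Qed.

Lemma Bf_linr c S T1 T2 : Bf S (tlin c T1 T2) = c * Bf S T1 + Bf S T2.
Proof.
rewrite /Bf /E1 /E2 /E3 /E4 /=.
rewrite !derivv_plin !ipr_ev ?bdr; try by auto.
absring.
Qed.

Lemma Lf_lin c T1 T2 : Lf (tlin c T1 T2) = c * Lf T1 + Lf T2.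
Proof.
rewrite /Lf /L3 /L4 /=.
rewrite !bdnu_lin !bdn_lin !ipr_ev; try exact: ipair_L2.
absring.
Qed.


Local Notation K := (('I_3 * 'I_4) * 'I_p.+1)%type.

Definition compv (s : 'I_4) (x : 'rV[R]_#|{: K}|) : polyvec R :=
  \col_i \poly_(d < p.+1) x 0 (enum_rank (i, s, inord d)).
Definition c4 k : 'I_4 := inord k.
Definition comb (x : 'rV[R]_#|{: K}|) : tup :=
  (compv (c4 0) x, compv (c4 1) x, compv (c4 2) x, compv (c4 3) x).
Definition tcomp (T : tup) (s : 'I_4) : polyvec R :=
  match val s with 0 => T.1.1.1 | 1 => T.1.1.2 | 2 => T.1.2 | _ => T.2 end.
Definition kidx (j : 'I_#|{: K}|) : K := enum_val j.
Definition coefs (T : tup) : 'rV[R]_#|{: K}| :=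
  \row_j (tcomp T (kidx j).1.2 (kidx j).1.1 0)`_(nat_of_ord (kidx j).2).

Lemma tcomp_comb x s : tcomp (comb x) s = compv s x.
Proof.
rewrite /tcomp /comb; case: s => [[|[|[|[|k]]]] Hk] //=;
  by congr compv; apply: val_inj; rewrite /= inordK.
Qed.

Lemma coefs_comb x : coefs (comb x) = x.
Proof.
apply/rowP => j; rewrite mxE /kidx.
case E: (enum_val j) => [[i s] d] /=.
rewrite tcomp_comb mxE coef_poly ltn_ord inord_val -E.
by rewrite enum_valK.
Qed.

Lemma comb_coefs T : Vp4 T -> comb (coefs T) = T.
Proof.
move: T => [[[a b] c] e] [/= Va Vb Vc Ve].
have key s P : tcomp (a, b, c, e) s = P -> in_Vp p P -> compv s (coefs (a, b, c, e)) = P.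
  move=> Es VP; apply/matrixP => i j; rewrite (ord1 j) mxE; apply/polyP => d.
  rewrite coef_poly mxE /kidx enum_rankK /= Es.
  case: ltnP => dp; first by rewrite inordK.
  by rewrite nth_default //; exact: leq_trans (VP i) dp.
have k0 : tcomp (a, b, c, e) (c4 0) = a by rewrite /tcomp /c4 /= inordK.
have k1 : tcomp (a, b, c, e) (c4 1) = b by rewrite /tcomp /c4 /= inordK.
have k2 : tcomp (a, b, c, e) (c4 2) = c by rewrite /tcomp /c4 /= inordK.
have k3 : tcomp (a, b, c, e) (c4 3) = e by rewrite /tcomp /c4 /= inordK.
by rewrite /comb (key _ _ k0) // (key _ _ k1) // (key _ _ k2) // (key _ _ k3).
Qed.

Lemma compv_lin s a x y : compv s (a *: x + y) = plin a (compv s x) (compv s y).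
Proof.
apply/matrixP => i j; rewrite !mxE; apply/polyP => d.
rewrite coefD coefCM !coef_poly !mxE.
by case: ifP => _; rewrite ?mulr0 ?addr0.
Qed.

Lemma comb_lin a x y : comb (a *: x + y) = tlin a (comb x) (comb y).
Proof. by rewrite /comb /tlin /= !compv_lin. Qed.

Lemma comb_Vp x : Vp4 (comb x).
Proof. by split => /= i; rewrite mxE; exact: size_poly. Qed.

Lemma plin_Vp (c : R) (a b : polyvec R) : in_Vp p a -> in_Vp p b -> in_Vp p (plin c a b).
Proof.
move=> Va Vb i; rewrite !mxE mul_polyC.
apply: leq_trans (size_polyD _ _) _; rewrite geq_max Vb andbT.
exact: leq_trans (size_scale_leq _ _) (Va i).
Qed.

Lemma tlin_Vp c S1 S2 : Vp4 S1 -> Vp4 S2 -> Vp4 (tlin c S1 S2).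
Proof.
by move=> [V1 V2 V3 V4] [W1 W2 W3 W4]; split; apply: plin_Vp.
Qed.

Lemma lin_sum (phi : 'rV[R]_#|{: K}| -> R) :
  (forall a x y, phi (a *: x + y) = a * phi x + phi y) ->
  forall x, phi x = \sum_j x 0 j * phi 'e_j.
Proof.
move=> L x.
have phi0 : phi 0 = 0.
  have := L 1 0 0; rewrite scaler0 addr0 mul1r => H; lra.
rewrite {1}(row_sum_delta x).
elim: (index_enum _) => [|j r IH]; first by rewrite !big_nil phi0.
by rewrite !big_cons /= L IH.
Qed.

Definition Amat : 'M[R]_#|{: K}| := \matrix_(j, k) Bf (comb 'e_j) (comb 'e_k).
Definition bvec : 'rV[R]_#|{: K}| := \row_k Lf (comb 'e_k).

Lemma BfT x T : Vp4 T -> Bf (comb x) T = \sum_k (coefs T) 0 k * (x *m Amat) 0 k.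
Proof.
move=> VT.
have L1 : forall a y z, Bf (comb x) (comb (a *: y + z)) = a * Bf (comb x) (comb y) + Bf (comb x) (comb z).
  by move=> a y z; rewrite comb_lin Bf_linr.
rewrite -{1}(comb_coefs VT) (lin_sum L1 (coefs T)).
apply: eq_bigr => k _; congr (_ * _).
have L2 : forall a y z, Bf (comb (a *: y + z)) (comb 'e_k) = a * Bf (comb y) (comb 'e_k) + Bf (comb z) (comb 'e_k).
  by move=> a y z; rewrite comb_lin Bf_linl.
rewrite (lin_sum L2 x) mxE; apply: eq_bigr => j _; by rewrite mxE.
Qed.

Lemma LfT T : Vp4 T -> Lf T = \sum_k (coefs T) 0 k * bvec 0 k.
Proof.
move=> VT.
have L1 : forall a y z, Lf (comb (a *: y + z)) = a * Lf (comb y) + Lf (comb z).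
  by move=> a y z; rewrite comb_lin Lf_lin.
rewrite -{1}(comb_coefs VT) (lin_sum L1 (coefs T)).
by apply: eq_bigr => k _; rewrite [bvec _ _]mxE.
Qed.

Lemma Amat_unit : Amat \in unitmx.
Proof.
rewrite -row_free_unit; apply: inj_row_free => x Hx.
have H0 : forall T, Vp4 T -> Bf (comb x) T = 0.
  by move=> T VT; rewrite BfT // Hx big1 // => k _; rewrite !mxE mulr0.
have Ec := hom (comb_Vp x) H0.
rewrite -(coefs_comb x) Ec; apply/rowP => j; rewrite !mxE.
by rewrite /tcomp; case: (val _) => [|[|[|?]]]; rewrite mxE coef0.
Qed.

Definition xsol := bvec *m invmx Amat.

Lemma xsol_ok T : Vp4 T -> Bf (comb xsol) T = Lf T.
Proof. by move=> VT; rewrite BfT // LfT // /xsol mulmxKV // Amat_unit. Qed.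

Lemma bdnu0 ak al : bdnu ak al 0 = 0.
Proof. by rewrite /bdnu !ev0 !dot30r oppr0 addr0. Qed.
Lemma L3_0 : L3 0 = 0.
Proof. rewrite /L3 ip_ev0r /bdn !ev0 !dot30r; lra. Qed.
Lemma L4_0 : L4 0 = 0.
Proof. rewrite /L4 ip_ev0r /bdn !ev0 !dot30r; lra. Qed.

Lemma plinN1 (a b : polyvec R) : plin (-1) a b = 0 -> b = a.
Proof.
rewrite /plin polyCN polyC1 scaleN1r => /eqP.
by rewrite addrC subr_eq0 => /eqP.
Qed.

Lemma main_sys : exists! (sol : tup),
    let: (ue, re, ne, me) := sol in
    [/\ in_Vp p ue, in_Vp p re, in_Vp p ne, in_Vp p me &
    forall pp qq vv ww : polyvec R,
      in_Vp p pp -> in_Vp p qq -> in_Vp p vv -> in_Vp p ww ->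
      [/\ E1 (ue, re, ne, me) pp = bdnu ubk ubl pp,
          E2 (ue, re, ne, me) qq = bdnu rbk rbl qq,
          E3 (ue, re, ne, me) vv = L3 vv &
          E4 (ue, re, ne, me) ww = L4 ww]].
Proof.
have VS := comb_Vp xsol.
have okS := xsol_ok.
exists (comb xsol); split.
  move: VS okS; case: (comb xsol) => [[[ue re] ne] me] [/= V1 V2 V3 V4] okS.
  split => // pp qq vv ww Vpp Vqq Vvv Vww; split.
  - have := okS (pp, 0, 0, 0) (And4 Vpp Vp0 Vp0 Vp0).
    by rewrite /Bf /Lf /= E2_0 E3_0 E4_0 bdnu0 L3_0 L4_0 !addr0.
  - have := okS (0, qq, 0, 0) (And4 Vp0 Vqq Vp0 Vp0).
    by rewrite /Bf /Lf /= E1_0 E3_0 E4_0 bdnu0 L3_0 L4_0 !addr0 !add0r.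
  - have := okS (0, 0, vv, 0) (And4 Vp0 Vp0 Vvv Vp0).
    by rewrite /Bf /Lf /= E1_0 E2_0 E4_0 !bdnu0 L4_0 !addr0 !add0r.
  - have := okS (0, 0, 0, ww) (And4 Vp0 Vp0 Vp0 Vww).
    by rewrite /Bf /Lf /= E1_0 E2_0 E3_0 !bdnu0 L3_0 !add0r.
move=> [[[u' r'] n'] m'] [V1 V2 V3 V4 Heq].
have okS' : forall T, Vp4 T -> Bf (u', r', n', m') T = Lf T.
  move=> [[[a b] c] d] [/= Va Vb Vc Vd].
  have [e1 e2 e3 e4] := Heq a b c d Va Vb Vc Vd.
  by rewrite /Bf /Lf /= e1 e2 e3 e4.
have VS' : Vp4 (u', r', n', m') by split.
have H0 : forall T, Vp4 T -> Bf (tlin (-1) (comb xsol) (u', r', n', m')) T = 0.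
  by move=> T VT; rewrite Bf_linl xsol_ok // okS' //; lra.
have D0 := hom (tlin_Vp (-1) VS VS') H0.
move: D0; case: (comb xsol) => [[[ue re] ne] me] /= [] /plinN1 -> /plinN1 -> /plinN1 -> /plinN1 ->.
by [].
Qed.

End Sys.

Unset Implicit Arguments.

Theorem lemma3p4 (R : realType)
  (nk nl : 'cV[R]_3) (hkl : nk != nl)
  (Cn Cm : R -> 'M[R]_3) (an bn am bm : R)
  (han : 0 < an) (hbn : 0 < bn) (ham : 0 < am) (hbm : 0 < bm)
  (Cn_sym : forall x, x \in `[0, norm3 (nl - nk)] -> (Cn x)^T = Cn x)
  (Cm_sym : forall x, x \in `[0, norm3 (nl - nk)] -> (Cm x)^T = Cm x)
  (Cn_bnd : forall x, x \in `[0, norm3 (nl - nk)] -> forall xi : 'cV[R]_3,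
      an * dot3 xi xi <= dot3 (Cn x *m xi) xi /\ dot3 (Cn x *m xi) xi <= bn * dot3 xi xi)
  (Cm_bnd : forall x, x \in `[0, norm3 (nl - nk)] -> forall xi : 'cV[R]_3,
      am * dot3 xi xi <= dot3 (Cm x *m xi) xi /\ dot3 (Cm x *m xi) xi <= bm * dot3 xi xi)
  (Cn_meas : forall i j, measurable_fun `[0, norm3 (nl - nk)] (fun x => Cn x i j))
  (Cm_meas : forall i j, measurable_fun `[0, norm3 (nl - nk)] (fun x => Cm x i j))
  (p : nat) (tau : R) (htau : 0 < tau)
  (ubk ubl rbk rbl : 'cV[R]_3)
  (f g : R -> 'cV[R]_3)
  (f_L2 : forall i, measurable_fun `[0, norm3 (nl - nk)] (fun x => f x i ord0) /\
      (lebesgue_measure : measure _ R).-integrable `[0, norm3 (nl - nk)]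
        (fun x => ((f x i ord0) ^+ 2)%:E))
  (g_L2 : forall i, measurable_fun `[0, norm3 (nl - nk)] (fun x => g x i ord0) /\
      (lebesgue_measure : measure _ R).-integrable `[0, norm3 (nl - nk)]
        (fun x => ((g x i ord0) ^+ 2)%:E)) :
  let h := norm3 (nl - nk) in
  let ie := h^-1 *: (nl - nk) in
  (* <a_n, b nu_e>_e with nu_e(n_k) = -1 (x = 0), nu_e(n_l) = +1 (x = h) *)
  let bdnu (ak al : 'cV[R]_3) (B : polyvec R) :=
      - dot3 ak (evalv B 0) + dot3 al (evalv B h) in
  let bdn (ak al : 'cV[R]_3) (B : polyvec R) :=
      dot3 ak (evalv B 0) + dot3 al (evalv B h) in
  let ev (P : polyvec R) := evalv P in
  exists! (sol : polyvec R * polyvec R * polyvec R * polyvec R),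
    let: (ue, re, ne, me) := sol in
    [/\ in_Vp p ue, in_Vp p re, in_Vp p ne, in_Vp p me &
    forall pp qq vv ww : polyvec R,
      in_Vp p pp -> in_Vp p qq -> in_Vp p vv -> in_Vp p ww ->
      [/\ - ip_e h (fun x => invmx (Cn x) *m ev ne x) (ev pp)
            + ip_e h (ev ue) (ev (derivv pp))
            - ip_e h (fun x => cross3 ie (ev re x)) (ev pp)
          = bdnu ubk ubl pp,
          - ip_e h (fun x => invmx (Cm x) *m ev me x) (ev qq)
            + ip_e h (ev re) (ev (derivv qq))
          = bdnu rbk rbl qq,
          ip_e h (ev (derivv ne)) (ev vv) + tau * bd_e h (ev ue) (ev vv)
          = ip_e h f (ev vv) + tau * bdn ubk ubl vv &
          ip_e h (fun x => cross3 ie (ev ne x)) (ev ww)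
            + ip_e h (ev (derivv me)) (ev ww) + tau * bd_e h (ev re) (ev ww)
          = ip_e h g (ev ww) + tau * bdn rbk rbl ww]].

Proof.
move=> h ie bdnu bdn ev.
have h0 : 0 < h.
  rewrite /h /norm3 sqrtr_gt0 lt_def dot3_ge0 andbT.
  apply/negP => /eqP /dot3_eq0 /eqP; rewrite subr_eq0 eq_sym.
  by rewrite (negbTE hkl).
exact: (main_sys h0 ie han hbn ham hbm Cn_sym Cm_sym Cn_bnd Cm_bnd Cn_meas Cm_meas
  p htau ubk ubl rbk rbl f_L2 g_L2).
Qed.
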